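(* Let $f\in\mathbb{F}[V]$ be an isobaric polynomial of weight $\lambda\in\mathbb{Z}/(q-1)\mathbb{Z}$ whose $P$-orbit $fP$ has $|fP|=|P|$ (i.e., the stabiliser of $f$ in $P$ is trivial). Then the orbit product $\prod fP=\prod_{\sigma\in P}f\sigma$ is isobaric of weight $\lambda$.
   Context: Let $p>2$ be a prime, $q=p^n$, and $\mathbb{F}$ a field of characteristic $p$ containing $\mathbb{F}_q$. Let $\mathbb{F}[V]=\mathbb{F}[a_0,a_1,a_2]$. For $c\in\mathbb{F}_q$ let $\sigma_c=\begin{pmatrix}1&c\\0&1\end{pmatrix}$, acting on the right on $\mathbb{F}[a_0,a_1,a_2]$ by the algebra automorphism $a_2\mapsto a_2+2ca_1+c^2a_0$, $a_1\mapsto a_1+ca_0$, $a_0\mapsto a_0$, and let $P=\{\sigma_c: c\in\mathbb{F}_q\}$. The weight of a monomial $a_0^{e_0}a_1^{e_1}a_2^{e_2}$ is $e_1+2e_2$ taken in $\mathbb{Z}/(q-1)\mathbb{Z}$ (i.e., $\mathrm{wt}(a_i)=i$, extended multiplicatively-to-additively); a polynomial is isobaric of weight $\lambda$ if all its monomials have weight $\lambda$. *)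

(* Defs.v *)
From HB Require Import structures.
From mathcomp Require Import all_boot all_order all_algebra all_field.
From mathcomp Require Import multinomials.mpoly.
Set Implicit Arguments. Unset Strict Implicit. Unset Printing Implicit Defensive.
Import GRing.Theory.
Local Open Scope ring_scope.

(* F[V] = F[a_0, a_1, a_2] is {mpoly F[3]}, a_i = 'X_i. *)
Definition a0 {F : comRingType} : {mpoly F[3]} := 'X_(@Ordinal 3 0 isT).
Definition a1 {F : comRingType} : {mpoly F[3]} := 'X_(@Ordinal 3 1 isT).
Definition a2 {F : comRingType} : {mpoly F[3]} := 'X_(@Ordinal 3 2 isT).

Definition sigma_act {F : comRingType} (c : F) (f : {mpoly F[3]}) : {mpoly F[3]} :=
  comp_mpoly [tuple a0; a1 + c *: a0; a2 + (2 * c) *: a1 + (c ^+ 2) *: a0] f.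

(* weight of a monomial a0^e0 a1^e1 a2^e2 : e1 + 2 e2 (as a natural number;
   it is compared modulo q-1 below) *)
Definition mweight (m : 'X_{1..3}) : nat :=
  (m (@Ordinal 3 1 isT) + 2 * m (@Ordinal 3 2 isT))%N.

Definition isobaric {F : comRingType} (q : nat) (f : {mpoly F[3]}) (lam : nat) : Prop :=
  forall m : 'X_{1..3}, m \in msupp f -> mweight m = lam %[mod q.-1].

(* Main.v *)
Require Import Defs.
From HB Require Import structures.
From mathcomp Require Import all_boot all_order all_algebra all_field all_solvable.
From mathcomp Require Import multinomials.mpoly.
From mathcomp Require Import ring.
Import GRing.Theory.
Local Open Scope ring_scope.

Section Aux.
Variable F : fieldType.

Definition tau (t : F) : 3.-tuple {mpoly F[3]} := [tuple a0; t *: a1; t ^+ 2 *: a2].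
Definition T (t : F) (p : {mpoly F[3]}) := comp_mpoly (tau t) p.

Lemma comp_comp (lq lr : 3.-tuple {mpoly F[3]}) p :
  comp_mpoly lq (comp_mpoly lr p) = comp_mpoly [tuple comp_mpoly lq (tnth lr i) | i < 3] p.
Proof.
have gen : forall s (c : 'X_{1..3} -> F),
  comp_mpoly lq (comp_mpoly lr (\sum_(m <- s) (c m *: 'X_[m] : {mpoly F[3]}))) =
  comp_mpoly [tuple comp_mpoly lq (tnth lr i) | i < 3] (\sum_(m <- s) (c m *: 'X_[m] : {mpoly F[3]})).
  move=> s c; rewrite (raddf_sum (comp_mpoly lr)) (raddf_sum (comp_mpoly lq)) (raddf_sum (comp_mpoly _)); apply: eq_bigr => m _.
  rewrite /= !comp_mpolyZ; congr (_ *: _).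
  rewrite !comp_mpolyX rmorph_prod; apply: eq_bigr => i _.
  by rewrite rmorphXn tnth_mktuple.
by have := gen (msupp p) (fun m => p@_m); rewrite -mpolyE.
Qed.

Lemma T_X (t : F) (m : 'X_{1..3}) : T t 'X_[m] = t ^+ (Defs.mweight m) *: 'X_[m].
Proof.
rewrite /T comp_mpolyX (mpolyXE_id F m) !big_ord_recl big_ord0 /tau /Defs.mweight /a0 /a1 /a2.
rewrite !(tnth_nth 0) /=.
have -> : lift ord0 (ord0 : 'I_2) = (@Ordinal 3 1 isT) by apply/val_inj.
have -> : lift ord0 (lift ord0 (ord0 : 'I_1)) = (@Ordinal 3 2 isT) by apply/val_inj.
have -> : (ord0 : 'I_3) = (@Ordinal 3 0 isT) by apply/val_inj.
rewrite big_ord0 !mulr1 !exprZn -!scalerAl -!scalerAr scalerA -exprM exprD (mulnC 2) //.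
Qed.


Lemma T_sigma (u c : F) f : T u (sigma_act (u * c) f) = sigma_act c (T u f).
Proof.
rewrite /T /sigma_act !comp_comp; apply: (congr1 (fun l => comp_mpoly l f)); apply: eq_from_tnth => i.
rewrite !tnth_mktuple.
case: i => [[|[|[|//]]] Hi]; rewrite !(tnth_nth 0) /= /a0 /a1 /a2.
- by rewrite !comp_mpolyXU.
- rewrite !comp_mpolyD !comp_mpolyZ !comp_mpolyXU /= scalerDr scalerA.
  by congr (_ + _ *: _); ring.
- rewrite !comp_mpolyD !comp_mpolyZ !comp_mpolyXU /= !scalerDr !scalerA.
  by congr (_ + _ *: _ + _ *: _); ring.
Qed.

Lemma T_coef (u : F) p m : (T u p)@_m = p@_m * u ^+ (Defs.mweight m).
Proof.
have -> : T u p = \sum_(m' <- msupp p) (p@_m' * u ^+ (Defs.mweight m')) *: 'X_[m'].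
  have gen : forall s (c : 'X_{1..3} -> F),
    T u (\sum_(m <- s) (c m *: 'X_[m] : {mpoly F[3]})) =
    \sum_(m <- s) (c m * u ^+ (Defs.mweight m)) *: 'X_[m].
    move=> s c; rewrite /T (raddf_sum (comp_mpoly _)); apply: eq_bigr => m' _.
    by rewrite /= comp_mpolyZ -/(T u _) T_X scalerA.
  by have := gen (msupp p) (fun m => p@_m); rewrite -mpolyE.
rewrite (raddf_sum (mcoeff m)).
under eq_bigr => m' _ do rewrite /= mcoeffZ mcoeffX.
have [Hm|Hm] := boolP (m \in msupp p).
  rewrite (bigD1_seq m) ?msupp_uniq //= eqxx mulr1 big1 ?addr0 // => m' /negbTE.
  by rewrite eq_sym => ->; rewrite mulr0.
rewrite big1_seq; last by move=> m' /= Hm'; case: eqP Hm' => [->|]; rewrite ?(negbTE Hm) // mulr0.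
by move: Hm; rewrite -mcoeff_eq0 => /eqP ->; rewrite mul0r.
Qed.

Lemma T_iso (u : F) N lam p : isobaric N p lam -> u ^+ N.-1 = 1 -> T u p = u ^+ lam *: p.
Proof.
move=> iso u1; apply/mpolyP => m; rewrite T_coef mcoeffZ mulrC.
have [Hm|Hm] := boolP (m \in msupp p).
  by rewrite -(expr_mod _ u1) (iso m Hm) (expr_mod _ u1).
by move: Hm; rewrite -mcoeff_eq0 => /eqP ->; rewrite !mulr0.
Qed.
Lemma T_prodE (u : F) (I : finType) (G : I -> {mpoly F[3]}) :
  T u (\prod_(i : I) G i) = \prod_(i : I) T u (G i).
Proof. exact: rmorph_prod. Qed.
End Aux.
Arguments T {F} t p.
Arguments T_sigma {F} u c f.
Arguments T_coef {F} u p m.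
Arguments T_iso {F} u N lam p.
Arguments T_prodE {F} u I G.

Theorem lemma2p1 (p n : nat) (F : fieldType) (Fq : finFieldType)
    (iota : {rmorphism Fq -> F}) (f : {mpoly F[3]}) (lam : nat) :
  prime p -> (2 < p)%N -> (0 < n)%N -> p \in [pchar F] ->
  #|Fq| = (p ^ n)%N ->
  isobaric (p ^ n) f lam ->
  size (undup [seq sigma_act (iota c) f | c <- enum Fq]) = #|Fq| ->
  isobaric (p ^ n) (\prod_(c : Fq) sigma_act (iota c) f) lam.
Proof.
move=> _ _ _ _ cardq iso _.
rewrite -cardq in iso *.
set q := #|Fq| in iso *.
have q1 : (0 < q.-1)%N.
  by rewrite /q -subn1 subn_gt0 finNzRing_gt1.
have unity : forall x : Fq, x != 0 -> x ^+ q.-1 = 1.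
  move=> x xnz; apply: (mulfI xnz); rewrite mulr1 -exprS prednK ?expf_card //.
  by rewrite /q (cardD1 0).
have /hasP [z _ zprim] : has q.-1.-primitive_root (enum [pred x : Fq | x != 0]).
  apply: has_prim_root => //.
  - by apply/allP => x; rewrite mem_enum inE => xnz; rewrite unity_rootE unity.
  - exact: enum_uniq.
  - by rewrite -cardE /q -(cardC1 0).
have znz : z != 0.
  by apply/eqP => z0; move: (prim_expr_order zprim); rewrite z0 expr0n gtn_eqF //= => /eqP; rewrite eq_sym oner_eq0.
set u := iota z.
have u1 : u ^+ q.-1 = 1 by rewrite /u -rmorphXn prim_expr_order // rmorph1.
have Tf : T u f = u ^+ lam *: f := T_iso _ _ _ _ iso u1.
set P := \prod_(c : Fq) sigma_act (iota c) f.
have TP : T u P = u ^+ lam *: P.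
  have hinj : injective (fun c : Fq => z * c) := mulfI znz.
  rewrite /P T_prodE [in LHS](reindex_inj hinj) /=.
  under eq_bigr => c _ do rewrite rmorphM -/u T_sigma Tf /sigma_act comp_mpolyZ -/(sigma_act _ _).
  rewrite scaler_prod prodr_const.
  rewrite -exprM mulnC exprM (_ : #|xpredT| = #|Fq|) // /u -[iota z ^+ #|Fq|]rmorphXn expf_card //.
move=> m Hm.
rewrite mcoeff_msupp in Hm.
have := congr1 (mcoeff m) TP; rewrite T_coef mcoeffZ mulrC => /(mulIf Hm) /eqP.
rewrite /u -!rmorphXn (inj_eq (fmorph_inj iota)) (eq_prim_root_expr zprim).
by move/eqP.
Qed.
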